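(* Assume (G2) from the context, let $M:=2c_Dc^2$ and let $\alpha_M\in(0,1/4)$ be such that $M g(r)\le g(\alpha_Mr)$ for all $r>0$. Let $y\in X$, $r>0$ and $0<\alpha<\alpha_M$. Then $$G_{U(y,r)}(x,y)\ge\tfrac12\,G(x,y)\qquad\text{for all }x\in U(y,2\alpha r).$$
   Context: $(X,\rho)$ is a separable metric space; $U(x,r)$ the open ball. For every open $U\subseteq X$ and $x\in X$ a finite Borel measure $\mu_x^U$ on $X$ is given with $\mu_x^U(U)=0$, $\mu_x^U(X)\le1$, and $\mu_x^U=\varepsilon_x$ (Dirac) if $x\notin U$. $G\colon X\times X\to(0,\infty]$ is Borel. For open $V$, $G_V(x,y):=G(x,y)-\int G(z,y)\,d\mu_x^V(z)$ for $x,y\in V$ and $G_V:=0$ outside $V\times V$. (G2): there are a strictly decreasing continuous $g\colon[0,\infty)\to(0,\infty]$ and $c,c_D,M_0\in[1,\infty)$, $\alpha_0\in(0,1)$ with $g(r/2)\le c_Dg(r)$, $M_0g(r)\le g(\alpha_0r)$ for all $r>0$ and $c^{-1}g(\rho(x,y))\le G(x,y)\le c\,g(\rho(x,y))$ for all $x,y$. *)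

(* Defs.v *)
From HB Require Import structures.
From mathcomp Require Import all_boot all_order all_algebra.
From mathcomp Require Import all_classical all_reals all_analysis measurable_realfun.
Set Implicit Arguments. Unset Strict Implicit. Unset Printing Implicit Defensive.
Import Order.TTheory GRing.Theory Num.Theory.
Local Open Scope classical_set_scope.
Local Open Scope ring_scope.

Section Defs.
Context {R : realType} {X : Type}.

Definition is_metric (rho : X -> X -> R) : Prop :=
  (forall x y, 0 <= rho x y) /\ (forall x y, rho x y = 0 <-> x = y) /\
  (forall x y, rho x y = rho y x) /\
  (forall x y z, rho x z <= rho x y + rho y z).

Definition mball (rho : X -> X -> R) (x : X) (r : R) : set X :=
  [set z | rho x z < r].

Definition mopen (rho : X -> X -> R) (U : set X) : Prop :=
  forall x, U x -> exists2 e : R, 0 < e & mball rho x e `<=` U.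

Definition mseparable (rho : X -> X -> R) : Prop :=
  exists D : set X, countable D /\
    forall x (e : R), 0 < e -> exists z, D z /\ rho x z < e.
End Defs.

Definition GV {R : realType} {d} {X : measurableType d}
  (mu : set X -> X -> {measure set X -> \bar R}) (G : X -> X -> \bar R)
  (V : set X) (x y : X) : \bar R :=
  if asbool (V x /\ V y) then (G x y - \int[mu V x]_z G z y)%E else 0%E.

(* Main.v *)
Require Import Defs.
From HB Require Import structures.
From mathcomp Require Import all_boot all_order all_algebra.
From mathcomp Require Import all_classical all_reals all_analysis measurable_realfun.
From mathcomp Require Import ring lra.
Import Order.TTheory GRing.Theory Num.Theory.
Local Open Scope classical_set_scope.
Local Open Scope ring_scope.

Theorem lemma6p5 (R : realType) (d : measure_display) (X : measurableType d)
  (rho : X -> X -> R)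
  (Hmetric : is_metric rho) (Hsep : mseparable rho)
  (HBorel : @measurable d X = <<s [set U | mopen rho U] >>)
  (mu : set X -> X -> {measure set X -> \bar R})
  (Hmu_U : forall U x, mopen rho U -> mu U x U = 0%E)
  (Hmu_X : forall U x, mopen rho U -> (mu U x setT <= 1)%E)
  (Hmu_dirac : forall U x, mopen rho U -> ~ U x ->
     forall A, measurable A -> mu U x A = \d_x A)
  (G : X -> X -> \bar R)
  (HGmeas : measurable_fun [set: X * X] (fun p : X * X => G p.1 p.2))
  (HGpos : forall x y, (0 < G x y)%E)
  (g : R -> \bar R) (c cD M0 alpha0 : R)
  (Hgpos : forall r : R, 0 <= r -> (0 < g r)%E)
  (Hgdec : forall s t : R, 0 <= s -> s < t -> (g t < g s)%E)
  (Hgcont : {within [set r | 0 <= r], continuous g})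
  (Hc : 1 <= c) (HcD : 1 <= cD) (HM0 : 1 <= M0)
  (Halpha0 : 0 < alpha0 < 1)
  (Hdoub : forall r : R, 0 < r -> (g (r / 2)%R <= cD%:E * g r)%E)
  (HM0g : forall r : R, 0 < r -> (M0%:E * g r <= g (alpha0 * r)%R)%E)
  (HG : forall x y, (c^-1%:E * g (rho x y) <= G x y)%E /\
                    (G x y <= c%:E * g (rho x y))%E)
  (alphaM : R) (HalphaM : 0 < alphaM < 4^-1)
  (HMg : forall r : R, 0 < r -> ((2 * cD * c ^+ 2)%:E * g r <= g (alphaM * r)%R)%E)
  (y : X) (r alpha : R) (Hr : 0 < r) (Halpha : 0 < alpha < alphaM) :
  forall x, mball rho y (2 * alpha * r) x ->
    (2^-1%:E * G x y <= GV mu G (mball rho y r) x y)%E.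
Proof.
Proof.
move=> x Hx.
have [rho0 [rhoeq [rhosym rhotri]]] := Hmetric.
case/andP: Halpha => a0 aM; case/andP: HalphaM => aM0 aM4.
have c0 : 0 < c by apply: lt_le_trans Hc.
have cD0 : 0 < cD by apply: lt_le_trans HcD.
set U := mball rho y r.
have Uopen : mopen rho U.
  move=> z Uz; exists (r - rho y z); first by rewrite subr_gt0.
  move=> w; rewrite /mball /U /= => hw.
  have := rhotri y z w; move: Uz; rewrite /U /mball /= => Uz; lra.
have mU : measurable U by rewrite HBorel; exact: sub_sigma_algebra.
have gfin : forall t, 0 < t -> (g t \is a fin_num)%E.
  move=> t t0; have hlt := Hgdec (t/2) t ltac:(lra) ltac:(lra).
  have ht := Hgpos t (ltW t0).
  rewrite ge0_fin_numE ?(ltW ht) //; exact: (lt_le_trans hlt (leey _)).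
have rpos : 0 < 2 * alpha * r by rewrite !mulr_gt0.
have rMpos : 0 < 2 * alphaM * r by rewrite !mulr_gt0.
have arpos : 0 < alphaM * r by rewrite !mulr_gt0.
have er := fineK (gfin r Hr).
have ea := fineK (gfin _ rpos).
have eM := fineK (gfin _ rMpos).
have eaM := fineK (gfin _ arpos).
set gr := fine (g r) in er; set ga := fine (g (2 * alpha * r)) in ea.
set gm := fine (g (2 * alphaM * r)) in eM; set gaM := fine (g (alphaM * r)) in eaM.
have gr0 : 0 <= gr by rewrite -lee_fin er; exact: ltW (Hgpos _ (ltW Hr)).
have key : 2 * c ^+ 2 * gr <= ga.
  have h1 := HMg r Hr; rewrite -er -eaM -EFinM lee_fin in h1.
  have h2 := Hdoub _ rMpos.
  have e2 : (2 * alphaM * r / 2 = alphaM * r)%R by field.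
  rewrite e2 in h2.
  rewrite -eaM -eM -EFinM lee_fin in h2.
  have lt3 : 2 * alpha * r < 2 * alphaM * r by nra.
  have h3 := Hgdec _ _ (ltW rpos) lt3.
  rewrite -ea -eM lte_fin in h3.
  have e4 : cD * (2 * c ^+ 2 * gr) = (2 * cD * c ^+ 2) * gr by ring.
  have h4 : cD * (2 * c ^+ 2 * gr) <= cD * gm by rewrite e4; lra.
  rewrite ler_pM2l // in h4; lra.
have mf : measurable_fun [set: X] (fun z => G z y).
  exact: (measurableT_comp HGmeas (pair2_measurable y)).
have G0 : forall z, (0 <= G z y)%E by move=> z; exact: ltW (HGpos z y).
set I := (\int[mu U x]_z G z y)%E.
have I0 : (0 <= I)%E by apply: integral_ge0 => z _; exact: G0.
have Ile : (I <= (c * gr)%:E)%E.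
  rewrite /I -(setUv U) ge0_integral_setU //; last 3 first.
  - exact: measurableC.
  - by rewrite setUv.
  - by rewrite /disj_set setICr.
  rewrite null_set_integral //; last 2 first.
  - exact: measurable_funS mf.
  - exact: Hmu_U.
  rewrite add0e.
  apply: (@le_trans _ _ (\int[mu U x]_(z in ~` U) (cst (c * gr)%:E) z)%E).
    apply: ge0_le_integral => //; try exact: measurableC;
      try (by move=> z _; exact: G0); try exact: (measurable_funS _ _ mf).
      move=> z Uz /=.
      have hz : r <= rho z y.
        rewrite rhosym; move: Uz; rewrite /U /mball /= => Uz; rewrite leNgt; apply/negP => h; exact: Uz.
      apply: le_trans (HG z y).2 _.
      rewrite EFinM; apply: lee_wpmul2l; first by rewrite lee_fin ltW.
      rewrite er; case: (ltgtP (rho z y) r) hz => // [h _|-> _] //.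
      by apply: ltW; apply: Hgdec => //; exact: ltW.
  rewrite integral_cst; last exact: measurableC.
  rewrite -[X in (_ <= X)%E]mule1; apply: lee_wpmul2l.
    by rewrite lee_fin mulr_ge0 // ltW.
  apply: le_trans (Hmu_X U x Uopen).
  apply: le_measure => //; rewrite inE //; exact: measurableC.
have Ifin : (I \is a fin_num)%E.
  rewrite (ge0_fin_numE I0); exact: (le_lt_trans Ile (ltey _)).
have hxr : rho y x < 2 * alpha * r by move: Hx; rewrite /mball.
have Glow : ((c^-1 * ga)%:E <= G x y)%E.
  apply: le_trans (HG x y).1; rewrite EFinM; apply: lee_wpmul2l.
    by rewrite lee_fin invr_ge0 ltW.
  rewrite ea; apply: ltW; apply: Hgdec; first exact: rho0.
  by rewrite rhosym.
have low2 : 2 * c * gr <= c^-1 * ga.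
  have e5 : 2 * c * gr = c^-1 * (2 * c ^+ 2 * gr) by field; exact: lt0r_neq0.
  rewrite e5 ler_wpM2l // invr_ge0 ltW //.
rewrite /GV asboolT; last first.
  have h2r : 2 * alpha * r < r by nra.
  split; rewrite /U /mball /=; first exact: lt_trans hxr h2r.
  by have [_ ->] := rhoeq y y.
rewrite -/U -/I -(fineK Ifin).
have iI : fine I <= c * gr by rewrite -lee_fin fineK.
move: Glow; case: (G x y) (HGpos x y) => [gx| |] //= _.
  rewrite !lee_fin => Glow; lra.
by move=> _; rewrite mulr_infty gtr0_sg ?invr_gt0 // mul1e leey.
Qed.
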